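(* Let $q$ be a power of an odd prime with $q\equiv1\pmod4$, let $k\ge3$ be a divisor of $q-1$ with $(q-1)/k$ even, and let $B$ be the subgroup of order $k$ of $\mathbb{F}_q^\times$. Then $(q,k)$ gives a $3$-design if and only if $$\sum_{\{x,y,z\}\in\binom{B}{3}}\chi\big((x-y)(y-z)(z-x)\big)=0,$$ where $\binom{B}{3}$ denotes the set of $3$-element subsets of $B$.
   Context: The group $\mathrm{PSL}(2,q)$ acts on $\mathrm{PG}(1,q)=\mathbb{F}_q\cup\{\infty\}$ by linear fractional transformations $z\mapsto (az+b)/(cz+d)$ with $ad-bc$ a nonzero square in $\mathbb{F}_q$. ''$(q,k)$ gives a $3$-design'' means that the $\mathrm{PSL}(2,q)$-orbit of $B$ is the block set of a $3$-$(q+1,k,\lambda)$ design for some positive integer $\lambda$. $\chi$ is the quadratic residue character: $\chi(a)=1$ if $a$ is a nonzero square in $\mathbb{F}_q$, $\chi(a)=-1$ otherwise (the summand is well defined since $\chi(-1)=1$). *)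

(* Defs.v *)
From HB Require Import structures.
From mathcomp Require Import all_boot all_order all_algebra all_field.
Set Implicit Arguments. Unset Strict Implicit. Unset Printing Implicit Defensive.
Import GRing.Theory.
Local Open Scope ring_scope.

Section Defs.
Variable F : finFieldType.

(* PG(1,q) = F ∪ {∞}, with None = ∞. *)
Definition point := option F.

Definition nzsq (a : F) : bool := (a != 0) && [exists x : F, x * x == a].

Definition chi (a : F) : int := if a == 0 then 0 else if nzsq a then 1 else -1.

Definition lft (m : F * F * F * F) (z : point) : point :=
  let: (a, b, c, d) := m in
  match z with
  | Some x => if c * x + d == 0 then None else Some ((a * x + b) / (c * x + d))
  | None => if c == 0 then None else Some (a / c)
  end.

(* matrices with determinant a nonzero square: they induce PSL(2,q) *)
Definition psl_mats : {set F * F * F * F} :=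
  [set m | let: (a, b, c, d) := m in nzsq (a * d - b * c)].

Definition embed (B : {set F}) : {set point} := [set Some x | x in B].

Definition orbit_blocks (B : {set F}) : {set {set point}} :=
  [set lft m @: embed B | m in psl_mats].

Definition gives_3design (B : {set F}) (k : nat) : Prop :=
  (forall Bl, Bl \in orbit_blocks B -> #|Bl| = k) /\
  exists lambda : nat, (0 < lambda)%N /\
    forall T : {set point}, #|T| = 3%N ->
      #|[set Bl in orbit_blocks B | T \subset Bl]| = lambda.

Definition triple_term (S : {set F}) : int :=
  let s := enum S in chi ((s`_0 - s`_1) * (s`_1 - s`_2) * (s`_2 - s`_0)).

Definition triple_sum (B : {set F}) : int :=
  \sum_(S in [set S : {set F} | (S \subset B) && (#|S| == 3%N)]) triple_term S.

End Defs.

(* Main.v *)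
Require Import Defs.
From HB Require Import structures.
From mathcomp Require Import all_boot all_order all_algebra all_field all_fingroup.
From mathcomp Require Import cyclic.
From mathcomp Require Import ring zify.
Set Implicit Arguments. Unset Strict Implicit. Unset Printing Implicit Defensive.
Import GRing.Theory.
Local Open Scope ring_scope.


Section Euler.
Variable F : finFieldType.
Let q := #|F|.
Let h := (q.-1)./2.

Lemma gen_exists : exists z : F, z != 0 /\ (forall j, (z ^+ j == 1) = (q.-1 %| j)%N)
   /\ forall x : F, x != 0 -> exists i, x = z ^+ i.
Proof.
have /cyclicP [u Hu] := field_unit_group_cyclic [set: {unit F}]%G.
have ou : #[u]%g = q.-1.
  by rewrite /order -Hu card_finField_unit.
exists (val u); split; first by rewrite -unitfE (valP u).
split.
  move=> j; rewrite -ou order_dvdn -FinRing.val_unitX -FinRing.val_unit1.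
  by rewrite (inj_eq val_inj).
move=> x nx; have : finField_unit nx \in <[u]>%g by rewrite -Hu inE.
case/cycleP => i Hi; exists i; rewrite -FinRing.val_unitX -Hi //.
Qed.
End Euler.


Section Sq.
Variable F : finFieldType.
Hypothesis Hq : (#|F| %% 4 = 1)%N.

Lemma q1E : (#|F|.-1 = (#|F|.-1)./2 * 2)%N /\ ~~ odd ((#|F|.-1)./2) /\ (0 < (#|F|.-1)./2)%N.
Proof. have := finNzRing_gt1 F; move: Hq; move: #|F| => n H1 H2.
rewrite -!divn2; split; [|split]; [lia| |lia].
rewrite -dvdn2; apply/dvdnP; exists (n.-1 %/ 4)%N; lia.
Qed.

Lemma zpow_gen : exists z : F, z != 0 /\ z ^+ ((#|F|.-1)./2) = -1 /\ (forall j, (z ^+ j == 1) = (#|F|.-1 %| j)%N) /\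
   forall x : F, x != 0 -> exists i, x = z ^+ i.
Proof.
have [z [nz [Hj Hx]]] := gen_exists F.
have [E [_ hp]] := q1E.
exists z; split=> //; split; last by split.
have h1 : (z ^+ (#|F|.-1)./2) ^+ 2 = 1.
  by rewrite -exprM; apply/eqP; rewrite Hj -E.
have h2 : z ^+ (#|F|.-1)./2 != 1.
  rewrite Hj; apply/negP => /dvdn_leq; rewrite hp => /(_ isT); lia.
move: h1 h2; move: (z ^+ _) => w h1 h2.
have : (w - 1) * (w + 1) = 0 by rewrite mulrDr mulr1 mulrBl mul1r -expr2 h1; ring.
move/eqP; rewrite mulf_eq0 subr_eq0 (negbTE h2) /= addr_eq0 => /eqP //.
Qed.
End Sq.


Section Sq2.
Variable F : finFieldType.
Hypothesis Hq : (#|F| %% 4 = 1)%N.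
Local Notation h := ((#|F|.-1)./2).

Lemma neg1_ne1 : (-1 : F) != 1.
Proof.
have [z [nz [zh [Hj Hx]]]] := zpow_gen Hq.
have [E [_ hp]] := q1E Hq.
rewrite -zh Hj; apply/negP => /dvdn_leq; rewrite hp => /(_ isT); lia.
Qed.

Lemma euler (x : F) : nzsq x = (x != 0) && (x ^+ h == 1).
Proof.
have [z [nz [Hj Hx]]] := gen_exists F.
have [E [_ hp]] := q1E Hq.
move: E hp; set hh := (#|F|.-1)./2 => E hp.
rewrite /nzsq; have [->|nx] := eqVneq x 0; first by [].
rewrite /=; apply/existsP/idP.
  case=> y /eqP Hy; have ny : y != 0 by apply: contraNneq nx => y0; rewrite -Hy y0 mul0r.
  rewrite -Hy; have [i ->] := Hx y ny.
  rewrite -expr2 -!exprM Hj E; apply/dvdnP; exists i; clearbody hh; nia.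
have [i ->] := Hx x nx.
rewrite -exprM Hj E => /dvdnP [j Hij].
have -> : i = (j * 2)%N by apply/eqP; rewrite -(eqn_pmul2r hp) Hij; apply/eqP; clearbody hh; lia.
by exists (z ^+ j); rewrite -exprD addnn -mul2n mulnC.
Qed.

Lemma powh_pm (x : F) : x != 0 -> (x ^+ h = 1) \/ (x ^+ h = -1).
Proof.
have [z [nz [zh [_ Hx]]]] := zpow_gen Hq.
move=> nx; have [i ->] := Hx x nx.
rewrite -exprM mulnC exprM zh -signr_odd; case: (odd i); [right|left]; by rewrite ?expr1 ?expr0.
Qed.

Lemma nzsqM (x y : F) : x != 0 -> y != 0 -> nzsq (x * y) = (nzsq x == nzsq y).
Proof.
move=> nx ny; rewrite !euler mulf_neq0 // nx ny /= exprMn.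
have n1 := neg1_ne1.
case: (powh_pm nx) => ->; case: (powh_pm ny) => ->;
  rewrite ?mul1r ?mulr1 ?mulrNN ?mulr1 ?eqxx ?(negbTE n1) //.
Qed.

Lemma nzsq_neg1 : nzsq (-1 : F).
Proof.
have [E [ev hp]] := q1E Hq.
by rewrite euler oppr_eq0 oner_eq0 /= -signr_odd (negbTE ev) expr0.
Qed.

Lemma nzsqN (x : F) : nzsq (- x) = nzsq x.
Proof.
have [->|nx] := eqVneq x 0; first by rewrite oppr0.
by rewrite -mulN1r nzsqM ?oppr_eq0 ?oner_eq0 // nzsq_neg1.
Qed.

Lemma exists_nonsq : exists n : F, n != 0 /\ ~~ nzsq n.
Proof.
have [z [nz [zh [_ Hx]]]] := zpow_gen Hq.
by exists z; split => //; rewrite euler nz zh /= neg1_ne1.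
Qed.

End Sq2.

Section SqGen.
Variable F : finFieldType.
Lemma nzsq_sq (a : F) : a != 0 -> nzsq (a * a).
Proof. by move=> na; rewrite /nzsq mulf_neq0 //=; apply/existsP; exists a. Qed.
Lemma nzsq_neq0 (a : F) : nzsq a -> a != 0.
Proof. by case/andP. Qed.
Lemma nzsq_mul (a b : F) : nzsq a -> nzsq b -> nzsq (a * b).
Proof.
case/andP => na /existsP [x /eqP Hx]; case/andP => nb /existsP [y /eqP Hy].
rewrite /nzsq mulf_neq0 //=; apply/existsP; exists (x * y); rewrite -Hx -Hy; apply/eqP; ring.
Qed.
Lemma nzsq_div (a b : F) : nzsq a -> nzsq b -> nzsq (a / b).
Proof.
case/andP => na /existsP [x /eqP Hx]; case/andP => nb /existsP [y /eqP Hy].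
rewrite /nzsq mulf_neq0 ?invr_eq0 //=; apply/existsP; exists (x / y).
have ny : y != 0 by apply: contraNneq nb => y0; rewrite -Hy y0 mul0r.
by rewrite -Hx -Hy mulrACA invfM.
Qed.
Lemma nzsq_sqmul (a x : F) : a != 0 -> nzsq (a * a * x) = nzsq x.
Proof.
move=> na; apply/idP/idP; last by apply: nzsq_mul; apply: nzsq_sq.
move=> H; have := nzsq_div H (nzsq_sq na).
by rewrite [a * a * x]mulrC mulfK // mulf_neq0.
Qed.
End SqGen.


Section Mob.
Variable F : finFieldType.
Local Notation mat := (F * F * F * F)%type.

Definition mdet (m : mat) : F := let: (a, b, c, d) := m in a * d - b * c.
Definition mmul (m n : mat) : mat :=
  let: (a, b, c, d) := m in let: (a', b', c', d') := n in
  (a * a' + b * c', a * b' + b * d', c * a' + d * c', c * b' + d * d').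
Definition madj (m : mat) : mat := let: (a, b, c, d) := m in (d, - b, - c, a).
Definition mscale (x : F) (m : mat) : mat :=
  let: (a, b, c, d) := m in (x * a, x * b, x * c, x * d).
Definition mid : mat := (1, 0, 0, 1).
Definition mv (m : mat) (v : F * F) : F * F :=
  let: (a, b, c, d) := m in (a * v.1 + b * v.2, c * v.1 + d * v.2).
Definition hv (p : point F) : F * F := if p is Some x then (x, 1) else (1, 0).
Definition nrm (v : F * F) : point F := if v.2 == 0 then None else Some (v.1 / v.2).
Definition Dt (u v : F * F) : F := u.1 * v.2 - u.2 * v.1.
Definition svec (x : F) (v : F * F) : F * F := (x * v.1, x * v.2).

Lemma pair2E (a b a' b' : F) : a = a' -> b = b' -> (a, b) = (a', b').
Proof. by move=> -> ->. Qed.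
Lemma pair4E (a b c d a' b' c' d' : F) : a = a' -> b = b' -> c = c' -> d = d' ->
  ((a, b, c, d) : mat) = (a', b', c', d').
Proof. by move=> -> -> -> ->. Qed.

Lemma lftE m p : lft m p = nrm (mv m (hv p)).
Proof. by case: m => [[[a b] c] d]; case: p => [x|]; rewrite /nrm /= ?mulr1 ?mulr0 ?addr0. Qed.

Lemma nrm_hv p : nrm (hv p) = p.
Proof. by case: p => [x|]; rewrite /nrm /= ?oner_eq0 ?divr1 ?eqxx. Qed.

Lemma nrm_scale x v : x != 0 -> nrm (svec x v) = nrm v.
Proof.
move=> nx; rewrite /nrm /= mulf_eq0 (negbTE nx) /=.
by case: ifP => // _; rewrite invfM mulrACA divff // mul1r.
Qed.

Lemma hv_nz p : hv p != (0, 0).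
Proof. by case: p => [x|]; rewrite /= xpair_eqE oner_eq0 ?andbF ?andFb. Qed.

Lemma hv_nrm v : v != (0, 0) -> exists2 x, x != 0 & v = svec x (hv (nrm v)).
Proof.
case: v => u w; rewrite xpair_eqE /nrm /=.
have [->|nw] := eqVneq w 0; rewrite ?andbT => nu.
  by exists u => //; rewrite /svec /= mulr1 mulr0.
by exists w => //; rewrite /svec /= mulr1 mulrC divfK.
Qed.

Lemma mv_nz m v : mdet m != 0 -> v != (0, 0) -> mv m v != (0, 0).
Proof.
case: m => [[[a b] c] d]; case: v => u w /= nd; apply: contraNneq => /eqP.
rewrite xpair_eqE => /andP [/eqP h1 /eqP h2].
have e1 : (a * d - b * c) * u = d * (a * u + b * w) - b * (c * u + d * w) by ring.
have e2 : (a * d - b * c) * w = a * (c * u + d * w) - c * (a * u + b * w) by ring.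
rewrite h1 h2 !mulr0 subrr in e1 e2.
move/eqP: e1; move/eqP: e2; rewrite !mulf_eq0 (negbTE nd) /= => /eqP -> /eqP -> //.
Qed.

Lemma mv_mul m n v : mv (mmul m n) v = mv m (mv n v).
Proof.
by case: m => [[[a b] c] d]; case: n => [[[a' b'] c'] d']; case: v => u w;
  apply: pair2E => /=; ring.
Qed.

Lemma mv_sv m x v : mv m (svec x v) = svec x (mv m v).
Proof. by case: m => [[[a b] c] d]; case: v => u w; apply: pair2E => /=; ring. Qed.

Lemma mv_mscale x m v : mv (mscale x m) v = svec x (mv m v).
Proof. by case: m => [[[a b] c] d]; case: v => u w; apply: pair2E => /=; ring. Qed.

Lemma mdet_mul m n : mdet (mmul m n) = mdet m * mdet n.
Proof. by case: m => [[[a b] c] d]; case: n => [[[a' b'] c'] d'] => /=; ring. Qed.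

Lemma mdet_adj m : mdet (madj m) = mdet m.
Proof. by case: m => [[[a b] c] d] => /=; ring. Qed.

Lemma mdet_scale x m : mdet (mscale x m) = x * x * mdet m.
Proof. by case: m => [[[a b] c] d] => /=; ring. Qed.

Lemma madj_mul m : mmul (madj m) m = mscale (mdet m) mid.
Proof. by case: m => [[[a b] c] d]; apply: pair4E => /=; ring. Qed.

Lemma mul_madj m : mmul m (madj m) = mscale (mdet m) mid.
Proof. by case: m => [[[a b] c] d]; apply: pair4E => /=; ring. Qed.

Lemma mmulA m n r : mmul m (mmul n r) = mmul (mmul m n) r.
Proof.
by case: m => [[[a b] c] d]; case: n => [[[a' b'] c'] d']; case: r => [[[a'' b''] c''] d''];
  apply: pair4E => /=; ring.
Qed.

Lemma mmul_scalel x m n : mmul (mscale x m) n = mscale x (mmul m n).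
Proof. by case: m => [[[a b] c] d]; case: n => [[[a' b'] c'] d']; apply: pair4E => /=; ring. Qed.

Lemma mmul_scaler x m n : mmul m (mscale x n) = mscale x (mmul m n).
Proof. by case: m => [[[a b] c] d]; case: n => [[[a' b'] c'] d']; apply: pair4E => /=; ring. Qed.

Lemma mmul1 m : mmul m mid = m.
Proof. by case: m => [[[a b] c] d]; apply: pair4E => /=; ring. Qed.
Lemma mul1m m : mmul mid m = m.
Proof. by case: m => [[[a b] c] d]; apply: pair4E => /=; ring. Qed.

Lemma mscaleA x y m : mscale x (mscale y m) = mscale (x * y) m.
Proof. by case: m => [[[a b] c] d]; apply: pair4E => /=; ring. Qed.
Lemma mscale1 m : mscale 1 m = m.
Proof. by case: m => [[[a b] c] d]; apply: pair4E => /=; ring. Qed.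

Lemma lft_mul m n p : mdet n != 0 -> lft (mmul m n) p = lft m (lft n p).
Proof.
move=> nd; rewrite !lftE mv_mul.
have [x nx Hv] := hv_nrm (mv_nz (v := hv p) nd (hv_nz p)).
by rewrite {1}Hv mv_sv nrm_scale.
Qed.

Lemma lft_scale x m p : x != 0 -> lft (mscale x m) p = lft m p.
Proof. by move=> nx; rewrite !lftE mv_mscale nrm_scale. Qed.

Lemma lft_id p : lft mid p = p.
Proof. by case: p => [x|] /=; rewrite ?eqxx // mul0r add0r oner_eq0 mul1r addr0 divr1. Qed.

Lemma lft_adjK m p : mdet m != 0 -> lft (madj m) (lft m p) = p.
Proof. by move=> nd; rewrite -lft_mul // madj_mul lft_scale // lft_id. Qed.

Lemma lft_Kadj m p : mdet m != 0 -> lft m (lft (madj m) p) = p.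
Proof. by move=> nd; rewrite -lft_mul ?mdet_adj // mul_madj lft_scale // lft_id. Qed.

Lemma lft_inj m : mdet m != 0 -> injective (lft m).
Proof. by move=> nd x y /(congr1 (lft (madj m))); rewrite !lft_adjK. Qed.

Lemma fix_scalar (n : mat) : lft n None = None -> lft n (Some 0) = Some 0 ->
  lft n (Some 1) = Some 1 -> exists c, n = (c, 0, 0, c).
Proof.
case: n => [[[a b] c] d] /=.
have [-> _|] := eqVneq c 0; last by [].
rewrite !mul0r !add0r mulr0 add0r.
have [//|nd [] bd] := eqVneq d 0.
rewrite mulr1 => -[] ad.
have b0 : b = 0 by move/eqP: bd; rewrite mulf_eq0 invr_eq0 (negbTE nd) orbF => /eqP.
move: ad; rewrite b0 addr0 => /eqP; rewrite -[X in _ == X](divff nd) => /eqP /(mulIf _).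
rewrite invr_eq0 => /(_ nd) ->; by exists d.
Qed.

End Mob.


Section G.
Variable F : finFieldType.
Local Notation mat := (F * F * F * F)%type.

Definition tau3 (p1 p2 p3 : point F) : F :=
  Dt (hv p1) (hv p2) * Dt (hv p2) (hv p3) * Dt (hv p3) (hv p1).

Lemma Dt_hv_eq0 (p r : point F) : (Dt (hv p) (hv r) == 0) = (p == r).
Proof.
case: p => [x|]; case: r => [y|]; rewrite /Dt /= ?mulr1 ?mul1r ?mulr0 ?mul0r ?subr0 ?sub0r
  ?oppr_eq0 ?oner_eq0 ?subr_eq0 ?eqxx //.
Qed.

Definition gmatv (v1 v2 v3 : F * F) : mat :=
  let d := Dt v1 v2 in let al := Dt v3 v2 / d in let be := Dt v1 v3 / d in
  (al * v1.1, be * v2.1, al * v1.2, be * v2.2).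

Lemma gmatv_spec (v1 v2 v3 : F * F) : Dt v1 v2 != 0 ->
  [/\ mv (gmatv v1 v2 v3) (1, 0) = svec (Dt v3 v2 / Dt v1 v2) v1,
      mv (gmatv v1 v2 v3) (0, 1) = svec (Dt v1 v3 / Dt v1 v2) v2,
      mv (gmatv v1 v2 v3) (1, 1) = v3 &
      mdet (gmatv v1 v2 v3) = Dt v1 v2 * Dt v2 v3 * Dt v3 v1 / (Dt v1 v2 * Dt v1 v2)].
Proof.
case: v1 v2 v3 => [u1 w1] [u2 w2] [u3 w3]; rewrite /Dt /= => nd.
split; rewrite /mv /svec /gmatv /Dt /=; try apply: pair2E; field; exact nd.
Qed.

End G.


Section C.
Variable F : finFieldType.
Local Notation mat := (F * F * F * F)%type.

Definition gmat (p1 p2 p3 : point F) : mat := gmatv (hv p1) (hv p2) (hv p3).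

Lemma gmat_spec (p1 p2 p3 : point F) : p1 != p2 -> p2 != p3 -> p3 != p1 ->
  [/\ lft (gmat p1 p2 p3) None = p1, lft (gmat p1 p2 p3) (Some 0) = p2,
      lft (gmat p1 p2 p3) (Some 1) = p3,
      mdet (gmat p1 p2 p3) = tau3 p1 p2 p3 / (Dt (hv p1) (hv p2) * Dt (hv p1) (hv p2)) &
      mdet (gmat p1 p2 p3) != 0].
Proof.
move=> n12 n23 n31.
have d12 : Dt (hv p1) (hv p2) != 0 by rewrite Dt_hv_eq0.
have d32 : Dt (hv p3) (hv p2) != 0 by rewrite Dt_hv_eq0 eq_sym.
have d13 : Dt (hv p1) (hv p3) != 0 by rewrite Dt_hv_eq0 eq_sym.
have [e1 e2 e3 e4] := gmatv_spec (hv p3) d12.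
rewrite /gmat !lftE e1 e2 e3 e4 !nrm_scale ?nrm_hv ?mulf_neq0 ?invr_eq0 //.
all: by rewrite ?mulf_neq0 // Dt_hv_eq0 // eq_sym.
Qed.

Lemma psl_matsE (m : mat) : (m \in psl_mats F) = nzsq (mdet m).
Proof. by case: m => [[[a b] c] d]; rewrite inE. Qed.

End C.


Section Count.
Variable F : finFieldType.
Hypothesis Hq : (#|F| %% 4 = 1)%N.
Local Notation mat := (F * F * F * F)%type.
Variables s1 s2 s3 t1 t2 t3 : point F.
Hypotheses (ns12 : s1 != s2) (ns23 : s2 != s3) (ns31 : s3 != s1).
Hypotheses (nt12 : t1 != t2) (nt23 : t2 != t3) (nt31 : t3 != t1).

Definition condm (m : mat) := [&& lft m s1 == t1, lft m s2 == t2 & lft m s3 == t3].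

Local Notation gs := (gmat s1 s2 s3).
Local Notation gt := (gmat t1 t2 t3).
Definition Kmat := mmul gt (madj gs).
Local Notation K := Kmat.

Lemma key1 a : a != 0 -> condm (mscale a K).
Proof.
move=> na; have [g1 g2 g3 _ dg] := gmat_spec ns12 ns23 ns31.
have [h1 h2 h3 _ dh] := gmat_spec nt12 nt23 nt31.
rewrite /condm !lft_scale // /Kmat !lft_mul ?mdet_adj //.
have A1 : lft (madj gs) s1 = None by move: (lft_adjK None dg); rewrite g1.
have A2 : lft (madj gs) s2 = Some 0 by move: (lft_adjK (Some 0) dg); rewrite g2.
have A3 : lft (madj gs) s3 = Some 1 by move: (lft_adjK (Some 1) dg); rewrite g3.
by rewrite A1 A2 A3 h1 h2 h3 !eqxx.
Qed.

Lemma key2 m : mdet m != 0 -> condm m -> exists2 a, a != 0 & m = mscale a K.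
Proof.
move=> nm /and3P [/eqP c1 /eqP c2 /eqP c3].
have [g1 g2 g3 _ dg] := gmat_spec ns12 ns23 ns31.
have [h1 h2 h3 _ dh] := gmat_spec nt12 nt23 nt31.
set n := mmul (mmul (madj gt) m) gs.
have Hn p : lft n p = lft (madj gt) (lft m (lft gs p)).
  by rewrite /n !lft_mul.
have [c Hc] : exists c, n = (c, 0, 0, c).
  apply: fix_scalar; rewrite Hn.
  - by rewrite g1 c1; move: (lft_adjK None dh); rewrite h1.
  - by rewrite g2 c2; move: (lft_adjK (Some 0) dh); rewrite h2.
  - by rewrite g3 c3; move: (lft_adjK (Some 1) dh); rewrite h3.
have nc : c != 0.
  have : mdet n != 0 by rewrite /n !mdet_mul mdet_adj !mulf_neq0.
  by rewrite Hc /= mulr0 subr0 mulf_eq0 orbb.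
have E1 : mmul (mmul gt n) (madj gs) = mscale c K.
  by rewrite Hc /Kmat -mmulA; case: gt => [[[a b] cc] d]; case: (madj gs) => [[[a' b'] c'] d'];
    apply: pair4E => /=; ring.
have E2 : mmul (mmul gt n) (madj gs) = mscale (mdet gt * mdet gs) m.
  rewrite /n !mmulA mul_madj mmul_scalel mul1m -mmulA mul_madj mmul_scaler mmul1.
  by rewrite mscaleA mulrC.
exists (c / (mdet gt * mdet gs)); first by rewrite mulf_neq0 ?invr_eq0 ?mulf_neq0.
rewrite mulrC -mscaleA -E1 E2 mscaleA mulVf ?mscale1 //.
by rewrite mulf_neq0.
Qed.


Lemma nzsq_divsq (x d : F) : d != 0 -> nzsq (x / (d * d)) = nzsq x.
Proof. by move=> nd; rewrite invfM mulrC nzsq_sqmul // invr_eq0. Qed.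

Lemma tau3_neq0 (p1 p2 p3 : point F) : p1 != p2 -> p2 != p3 -> p3 != p1 -> tau3 p1 p2 p3 != 0.
Proof. by move=> h1 h2 h3; rewrite /tau3 !mulf_neq0 // Dt_hv_eq0. Qed.

Lemma nzsqK : nzsq (mdet K) = (nzsq (tau3 s1 s2 s3) == nzsq (tau3 t1 t2 t3)).
Proof.
have [_ _ _ eg dg] := gmat_spec ns12 ns23 ns31.
have [_ _ _ eh dh] := gmat_spec nt12 nt23 nt31.
rewrite /Kmat mdet_mul mdet_adj nzsqM // eg eh !nzsq_divsq ?Dt_hv_eq0 // eq_sym.
Qed.

Lemma Kinj : {in predC1 0 &, injective (fun a => mscale a K)}.
Proof.
have [_ _ _ eg dg] := gmat_spec ns12 ns23 ns31.
have [_ _ _ eh dh] := gmat_spec nt12 nt23 nt31.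
have nK : mdet K != 0 by rewrite /Kmat mdet_mul mdet_adj mulf_neq0.
move=> a b _ _ /(congr1 (fun m => (mmul m (madj K)).1.1.1)).
have E a0 : (mmul (mscale a0 K) (madj K)).1.1.1 = a0 * mdet K.
  by rewrite mmul_scalel mul_madj mscaleA /= mulr1.
by rewrite !E => /(mulIf nK).
Qed.

Lemma count_mats : #|[set m in psl_mats F | condm m]| =
  if nzsq (tau3 s1 s2 s3) == nzsq (tau3 t1 t2 t3) then #|F|.-1 else 0%N.
Proof.
rewrite -nzsqK; case: ifP => H.
  have -> : [set m in psl_mats F | condm m] = [set mscale a K | a in predC1 0].
    apply/setP => m; rewrite inE psl_matsE; apply/andP/imsetP.
      case=> Hs Hc; have [a na Ha] := key2 (nzsq_neq0 Hs) Hc.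
      by exists a.
    case=> a; rewrite inE => na ->; split; last exact: key1.
    by rewrite mdet_scale nzsq_sqmul.
  by rewrite card_in_imset ?cardC1 //; exact: Kinj.
apply/eqP; rewrite cards_eq0; apply/eqP/setP => m; rewrite inE psl_matsE inE.
apply/negP => /andP [Hs Hc]; have [a na Ha] := key2 (nzsq_neq0 Hs) Hc.
by move: Hs; rewrite Ha mdet_scale nzsq_sqmul // H.
Qed.

End Count.


Section Fib.
Variable F : finFieldType.
Local Notation mat := (F * F * F * F)%type.
Variable B : {set F}.
Local Notation eB := (embed B).
Local Notation G := (psl_mats F).

Lemma mscale_inj (d : F) : d != 0 -> injective (mscale d).
Proof.
move=> nd x y /(congr1 (mscale d^-1)); rewrite !mscaleA mulVf // !mscale1 //.
Qed.

Lemma mmul_inj (m0 : mat) : mdet m0 != 0 -> injective (mmul m0).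
Proof.
move=> nd x y /(congr1 (mmul (madj m0))); rewrite !mmulA madj_mul !mmul_scalel !mul1m.
exact: mscale_inj.
Qed.

Lemma lft_mul_imset (m n : mat) (A : {set point F}) : mdet n != 0 ->
  lft (mmul m n) @: A = lft m @: (lft n @: A).
Proof. by move=> nd; rewrite -imset_comp; apply: eq_imset => p; rewrite /= lft_mul. Qed.

Lemma lft_scale_imset x (m : mat) (A : {set point F}) : x != 0 ->
  lft (mscale x m) @: A = lft m @: A.
Proof. by move=> nx; apply: eq_imset => p; rewrite lft_scale. Qed.

Lemma lft_id_imset (A : {set point F}) : lft (@mid F) @: A = A.
Proof. by rewrite (eq_imset _ (@lft_id F)) imset_id. Qed.

Lemma fiber Bl : Bl \in orbit_blocks B ->
  #|[set m in G | lft m @: eB == Bl]| = #|[set m in G | lft m @: eB == eB]|.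
Proof.
case/imsetP => m0; rewrite psl_matsE => H0 ->.
have nd0 := nzsq_neq0 H0.
rewrite -(card_imset [set m in G | lft m @: eB == eB] (mmul_inj nd0)).
suff -> : [set m in G | lft m @: eB == lft m0 @: eB] =
  mmul m0 @: [set m in G | lft m @: eB == eB] by [].
apply/setP => m; rewrite inE psl_matsE; apply/andP/imsetP.
  case=> Hm /eqP E.
  exists (mscale (mdet m0)^-1 (mmul (madj m0) m)).
    rewrite inE psl_matsE mdet_scale mdet_mul mdet_adj.
    have -> : (mdet m0)^-1 * (mdet m0)^-1 * (mdet m0 * mdet m) = mdet m / mdet m0.
      by field.
    rewrite nzsq_div //=.
    rewrite lft_scale_imset ?invr_eq0 // lft_mul_imset; last exact: nzsq_neq0.
    by rewrite E -lft_mul_imset ?madj_mul ?lft_scale_imset ?lft_id_imset.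
  by rewrite mmul_scaler mmulA mul_madj mmul_scalel mul1m mscaleA mulVf ?mscale1.
case=> n; rewrite inE psl_matsE => /andP [Hn /eqP E] ->.
split; first by rewrite mdet_mul nzsq_mul.
by rewrite lft_mul_imset ?E // nzsq_neq0.
Qed.

Lemma cnt_blocks (T : {set point F}) :
  #|[set m in G | T \subset lft m @: eB]| =
  (#|[set m in G | lft m @: eB == eB]| * #|[set Bl in orbit_blocks B | T \subset Bl]|)%N.
Proof.
rewrite -(sum1dep_card (fun m => (m \in G) && (T \subset lft m @: eB))).
rewrite (partition_big (fun m => lft m @: eB) (fun Bl => (Bl \in orbit_blocks B) && (T \subset Bl))) /=; last first.
  by move=> m /andP [Hm HT]; rewrite HT andbT; apply: imset_f.
rewrite -(sum1dep_card (fun Bl => (Bl \in orbit_blocks B) && (T \subset Bl))) big_distrr /=.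
apply: eq_bigr => Bl /andP [HBl HT].
rewrite muln1 -(fiber HBl) -sum1dep_card; apply: eq_bigl => m.
by case: eqP => [->|]; rewrite ?HT ?andbT ?andbF.
Qed.

End Fib.


Section Tr.
Variable F : finFieldType.
Hypothesis Hq : (#|F| %% 4 = 1)%N.
Local Notation mat := (F * F * F * F)%type.
Variable B : {set F}.
Local Notation eB := (embed B).
Local Notation G := (psl_mats F).

Definition B3d : {set F * F * F} :=
  [set b | [&& b.1.1 \in B, b.1.2 \in B & b.2 \in B] && [&& b.1.1 != b.1.2, b.1.2 != b.2 & b.2 != b.1.1]].

Variables t1 t2 t3 : point F.
Hypotheses (nt12 : t1 != t2) (nt23 : t2 != t3) (nt31 : t3 != t1).

Definition condb (m : mat) (b : F * F * F) :=
  condm (Some b.1.1) (Some b.1.2) (Some b.2) t1 t2 t3 m.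

Lemma subset_cond (m : mat) : m \in G ->
  #|[set b | (b \in B3d) && condb m b]| =
  (if [set t1; t2; t3] \subset lft m @: eB then 1 else 0)%N.
Proof.
rewrite psl_matsE => /nzsq_neq0 nm.
case: ifP => HT.
  have memT t : t \in [set t1; t2; t3] -> exists2 y, y \in B & lft m (Some y) = t.
    by move=> /(subsetP HT) /imsetP [x /imsetP [y Hy ->] ->]; exists y.
  have [y1 Hy1 e1] : exists2 y, y \in B & lft m (Some y) = t1 by apply: memT; rewrite !inE eqxx.
  have [y2 Hy2 e2] : exists2 y, y \in B & lft m (Some y) = t2 by apply: memT; rewrite !inE eqxx orbT.
  have [y3 Hy3 e3] : exists2 y, y \in B & lft m (Some y) = t3 by apply: memT; rewrite !inE eqxx !orbT.
  apply/eqP/cards1P; exists (y1, y2, y3); apply/setP => b; rewrite !inE.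
  apply/idP/eqP.
    case/andP => _ /and3P [/eqP f1 /eqP f2 /eqP f3].
    case: b f1 f2 f3 => [[x1 x2] x3] /= f1 f2 f3.
    have g1 : Some x1 = Some y1 by apply: (lft_inj nm); rewrite f1 e1.
    have g2 : Some x2 = Some y2 by apply: (lft_inj nm); rewrite f2 e2.
    have g3 : Some x3 = Some y3 by apply: (lft_inj nm); rewrite f3 e3.
    by case: g1 g2 g3 => -> [->] [->].
  move=> -> /=; rewrite /condb /condm /= e1 e2 e3 !eqxx Hy1 Hy2 Hy3 /= andbT.
  apply/and3P; split.
  - by apply: contraNneq nt12 => e; rewrite -e1 -e2 e.
  - by apply: contraNneq nt23 => e; rewrite -e2 -e3 e.
  - by apply: contraNneq nt31 => e; rewrite -e3 -e1 e.
apply/eqP; rewrite cards_eq0; apply/eqP/setP => b0; rewrite !inE.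
apply/negbTE/negP => /andP [/andP [/and3P [H1 H2 H3] _]] /and3P [/eqP f1 /eqP f2 /eqP f3].
move/negP: HT; apply.
apply/subsetP => x; rewrite !inE => /orP [/orP [] | ] /eqP ->; apply/imsetP.
- by exists (Some b0.1.1); rewrite ?f1 //; apply: imset_f.
- by exists (Some b0.1.2); rewrite ?f2 //; apply: imset_f.
- by exists (Some b0.2); rewrite ?f3 //; apply: imset_f.
Qed.

Lemma cnt_triples :
  #|[set m in G | [set t1; t2; t3] \subset lft m @: eB]| =
  (#|F|.-1 * #|[set b in B3d | nzsq (tau3 (Some b.1.1) (Some b.1.2) (Some b.2)) ==
                              nzsq (tau3 t1 t2 t3)]|)%N.
Proof.
rewrite -(sum1dep_card (fun m => (m \in G) && ([set t1; t2; t3] \subset lft m @: eB))).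
rewrite big_mkcondr /=.
transitivity (\sum_(m | m \in G) \sum_(b | (b \in B3d) && condb m b) 1)%N.
  apply: eq_bigr => m Hm; rewrite sum1dep_card subset_cond //.
rewrite (exchange_big_dep (fun b => b \in B3d)) /=; last by move=> m b _ /andP [].
rewrite -sum1dep_card big_distrr big_mkcondr /=.
apply: eq_bigr => b Hb.
rewrite (eq_bigl (fun m => (m \in G) && condb m b)); last by move=> m; rewrite Hb.
move: Hb; rewrite inE => /andP [_ /and3P [n12 n23 n31]].
rewrite sum1dep_card muln1.
by rewrite /condb (count_mats Hq) // (inj_eq (@Some_inj _)).
Qed.

End Tr.


Section Six.
Variable F : finFieldType.
Hypothesis Hq : (#|F| %% 4 = 1)%N.

Definition tauF (b : F * F * F) : F := (b.1.1 - b.1.2) * (b.1.2 - b.2) * (b.2 - b.1.1).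

Lemma tau3_some (b : F * F * F) : tau3 (Some b.1.1) (Some b.1.2) (Some b.2) = tauF b.
Proof. by rewrite /tau3 /Dt /tauF /= !mulr1 !mul1r. Qed.

Lemma chiN (a : F) : chi (- a) = chi a.
Proof. by rewrite /chi oppr_eq0 (nzsqN Hq). Qed.

Lemma enum3 (T : finType) (S : {set T}) : #|S| = 3%N ->
  exists x y z, [/\ enum S = [:: x; y; z], S = [set x; y; z], x != y, y != z & z != x].
Proof.
move=> HS; have : size (enum S) = 3%N by rewrite -cardE.
have U := enum_uniq (mem S); have M := mem_enum (mem S).
case E: (enum S) => [|x [|y [|z [|w s]]]] // _.
rewrite E /= !inE in U; case/and3P: U => /norP [nxy nxz] nyz _.
exists x, y, z; split => //.
- by apply/setP => t; rewrite -M E !inE orbA.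
- by rewrite eq_sym.
Qed.

Variable B : {set F}.

Lemma six (S : {set F}) : #|S| = 3%N -> S \subset B ->
  \sum_(b | (b \in B3d B) && ([set b.1.1; b.1.2; b.2] == S)) chi (tauF b) = triple_term S *+ 6.
Proof.
move=> HS HSB; have [x [y [z [E ES nxy nyz nzx]]]] := enum3 HS.
have hx : x \in B by apply: (subsetP HSB); rewrite ES !inE eqxx.
have hy : y \in B by apply: (subsetP HSB); rewrite ES !inE eqxx orbT.
have hz : z \in B by apply: (subsetP HSB); rewrite ES !inE eqxx !orbT.
have nyx : y != x by rewrite eq_sym.
have nzy : z != y by rewrite eq_sym.
have nxz : x != z by rewrite eq_sym.
set perms6 := [:: (x, y, z); (x, z, y); (y, x, z); (y, z, x); (z, x, y); (z, y, x)].
rewrite (eq_bigl (fun b => b \in perms6)); last first.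
  case=> [[b1 b2] b3] /=; apply/idP/idP.
    case/andP => Hb /eqP HS3.
    have h1 : b1 \in S by rewrite -HS3 !inE eqxx.
    have h2 : b2 \in S by rewrite -HS3 !inE eqxx orbT.
    have h3 : b3 \in S by rewrite -HS3 !inE eqxx !orbT.
    move: h1 h2 h3 Hb; rewrite ES !inE /=.
    by do 3 (case/orP => [/orP [] | ] /eqP ->); rewrite ?eqxx ?andbF //= ?eqxx ?orbT.
  rewrite /perms6 => Hb.
  case/predU1P: Hb => [[-> -> ->]|/predU1P [[-> -> ->]|/predU1P [[-> -> ->]|/predU1P [[-> -> ->]|/predU1P [[-> -> ->]|/predU1P [[-> -> ->]|//]]]]]];
  rewrite !inE /= ?hx ?hy ?hz ?nxy ?nyz ?nzx ?nyx ?nzy ?nxz /= ES; apply/eqP/setP => w; rewrite !inE;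
  by case: (w == x); case: (w == y); case: (w == z).
rewrite -big_uniq; last first.
  by rewrite /perms6 /= !inE !xpair_eqE !eqxx ?(negbTE nxy) ?(negbTE nyz) ?(negbTE nzx) ?(negbTE nyx) ?(negbTE nzy) ?(negbTE nxz) ?andbF ?andFb.
rewrite /perms6 !big_cons big_nil /triple_term E /tauF /=.
have -> : (x - z) * (z - y) * (y - x) = - ((x - y) * (y - z) * (z - x)) by ring.
have -> : (y - x) * (x - z) * (z - y) = - ((x - y) * (y - z) * (z - x)) by ring.
have -> : (y - z) * (z - x) * (x - y) = ((x - y) * (y - z) * (z - x)) by ring.
have -> : (z - x) * (x - y) * (y - z) = ((x - y) * (y - z) * (z - x)) by ring.
have -> : (z - y) * (y - x) * (x - z) = - ((x - y) * (y - z) * (z - x)) by ring.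
by rewrite !chiN !mulrS mulr0n.
Qed.
End Six.

Import Num.Theory.


Section Fin.
Variable F : finFieldType.
Hypothesis Hq : (#|F| %% 4 = 1)%N.
Variable B : {set F}.

Definition tauS (b : F * F * F) := tau3 (Some b.1.1) (Some b.1.2) (Some b.2).

Lemma cards3 (T : finType) (a b c : T) : a != b -> b != c -> c != a -> #|[set a; b; c]| = 3%N.
Proof.
move=> nab nbc nca.
have -> : [set a; b; c] = a |: [set b; c] by apply/setP => x; rewrite !inE orbA.
rewrite cardsU1 cards2 nbc !inE negb_or nab eq_sym nca.
by [].
Qed.

Lemma sum_six : \sum_(b in B3d B) chi (tauF b) = triple_sum B *+ 6.
Proof.
rewrite /triple_sum -sumrMnl.
rewrite (partition_big (fun b => [set b.1.1; b.1.2; b.2])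
   (fun S => S \in [set S : {set F} | (S \subset B) && (#|S| == 3%N)])) /=; last first.
  move=> b; rewrite !inE => /andP [/and3P [h1 h2 h3] /and3P [n12 n23 n31]].
  rewrite cards3 // eqxx andbT; apply/subsetP => x; rewrite !inE.
  by case/orP => [/orP [] | ] /eqP ->.
apply: eq_bigr => S; rewrite inE => /andP [HSB /eqP HS].
by rewrite -(six Hq HS HSB).
Qed.

Lemma sum_chi : \sum_(b in B3d B) chi (tauF b) =
  (#|[set b in B3d B | nzsq (tauS b) == true]|%:Z - #|[set b in B3d B | nzsq (tauS b) == false]|%:Z)%R.
Proof.
rewrite (bigID (fun b => nzsq (tauF b))) /=.
have nz b : b \in B3d B -> tauF b != 0.
  rewrite inE => /andP [_ /and3P [n12 n23 n31]].
  by rewrite /tauF !mulf_neq0 // subr_eq0 // eq_sym.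
rewrite (eq_bigr (fun _ => 1)); last first.
  by move=> b /andP [Hb Hs]; rewrite /chi (negbTE (nz b Hb)) Hs.
rewrite [X in _ + X](eq_bigr (fun _ => -1)); last first.
  by move=> b /andP [Hb Hs]; rewrite /chi (negbTE (nz b Hb)) (negbTE Hs).
rewrite (eq_bigl (fun b => b \in [set b in B3d B | nzsq (tauS b) == true])); last first.
  by move=> b; rewrite !inE /tauS tau3_some eqb_id.
rewrite [X in _ + X](eq_bigl (fun b => b \in [set b in B3d B | nzsq (tauS b) == false])); last first.
  by move=> b; rewrite !inE /tauS tau3_some eqbF_neg.
by rewrite !sumr_const mulNrn !natz.
Qed.

End Fin.


Lemma tau_plus (F : finFieldType) : tau3 None (Some (0 : F)) (Some 1) = 1.
Proof. by rewrite /tau3 /Dt /=; ring. Qed.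
Lemma tau_minus (F : finFieldType) (n : F) : tau3 None (Some 0) (Some n) = n.
Proof. by rewrite /tau3 /Dt /=; ring. Qed.

Unset Implicit Arguments.

Theorem lemma2p6 (F : finFieldType) (k : nat) (B : {set F}) :
  (#|F| %% 4 = 1)%N ->
  (3 <= k)%N -> (k %| #|F|.-1)%N -> ~~ odd (#|F|.-1 %/ k)%N ->
  (* B is the subgroup of order k of F^x *)
  (0 : F) \notin B -> (1 : F) \in B ->
  (forall x y, x \in B -> y \in B -> x * y \in B) -> #|B| = k ->
  (gives_3design B k <-> triple_sum B = 0).
Proof.
move=> Hq Hk _ _ _ _ _ HB.
set s0 := #|[set m in psl_mats F | lft m @: embed B == embed B]|.
have s0pos : (0 < s0)%N.
  apply/card_gt0P; exists (@mid F); rewrite inE psl_matsE lft_id_imset eqxx andbT.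
  by rewrite /mdet /mid /= mulr0 subr0 nzsq_sq // oner_neq0.
have q1pos : (0 < #|F|.-1)%N.
  by have := finNzRing_gt1 F; move=> h; rewrite -ltnS prednK // ltnW.
have nzsq1 : nzsq (1 : F) by rewrite -[X in nzsq X](mulr1 1) nzsq_sq // oner_neq0.
set Np := #|[set b in B3d B | nzsq (tauS b) == true]|.
set Nn := #|[set b in B3d B | nzsq (tauS b) == false]|.
have KE t1 t2 t3 : t1 != t2 -> t2 != t3 -> t3 != t1 ->
   (s0 * #|[set Bl in orbit_blocks B | [set t1; t2; t3] \subset Bl]| =
    #|F|.-1 * (if nzsq (tau3 t1 t2 t3) then Np else Nn))%N.
  move=> n12 n23 n31; rewrite -(cnt_blocks B) (cnt_triples Hq B n12 n23 n31).
  by case: (nzsq (tau3 t1 t2 t3)).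
have n01 : Some (0 : F) != Some 1 by rewrite (inj_eq (@Some_inj _)) eq_sym oner_neq0.
have KP := KE None (Some 0) (Some 1) isT n01 isT.
rewrite tau_plus nzsq1 in KP.
have [n [nn0 nsq]] := exists_nonsq Hq.
have n0n : Some (0 : F) != Some n by rewrite (inj_eq (@Some_inj _)) eq_sym.
have KM := KE None (Some 0) (Some n) isT n0n isT.
rewrite tau_minus (negbTE nsq) in KM.
have SS : triple_sum B *+ 6 = Np%:Z - Nn%:Z by rewrite -sum_six // sum_chi.
split.
  case=> _ [lam [_ Hl]].
  have e1 := Hl _ (cards3 (isT : None != Some (0 : F)) n01 (isT : Some 1 != None)).
  have e2 := Hl _ (cards3 (isT : None != Some (0 : F)) n0n (isT : Some n != None)).
  rewrite e1 in KP; rewrite e2 KP in KM.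
  have HN : Np = Nn by apply/eqP; rewrite -(eqn_pmul2l q1pos) KM.
  by move: SS; rewrite HN subrr => /eqP; rewrite mulrn_eq0 /= => /eqP.
move=> Hs.
have HN : Np = Nn by move: SS; rewrite Hs mul0rn => /eqP; rewrite eq_sym subr_eq0 => /eqP [].
split.
  move=> Bl /imsetP [m Hm ->]; rewrite card_imset; last first.
    by apply: lft_inj; apply: nzsq_neq0; rewrite -psl_matsE.
  by rewrite card_imset //; exact: Some_inj.
exists #|[set Bl in orbit_blocks B | [set None; Some 0; Some 1] \subset Bl]|; split.
  have [b0 Hb0] : exists b0, b0 \in B3d B.
    have : size (enum B) = k by rewrite -cardE.
    have U := enum_uniq (mem B); have M := mem_enum (mem B).
    case E: (enum B) => [|x [|y [|z s]]] /=; try by move=> Hs'; rewrite -Hs' in Hk.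
    move=> _; rewrite E /= !inE in U; case/and4P: U => /norP [nxy /norP [nxz _]] /norP [nyz _] _ _.
    exists (x, y, z); rewrite !inE /= -!M E !inE !eqxx ?orbT /= nxy nyz eq_sym nxz.
    by [].
  have Nppos : (0 < Np)%N.
    case/boolP: (nzsq (tauS b0)) => h.
      by apply/card_gt0P; exists b0; rewrite inE Hb0 h.
    by rewrite HN; apply/card_gt0P; exists b0; rewrite inE Hb0 (negbTE h).
  rewrite lt0n; apply/eqP => H0; move: KP; rewrite H0 muln0 => /esym /eqP.
  by rewrite muln_eq0 !eqn0Ngt q1pos Nppos.
move=> T HT; have [t1 [t2 [t3 [_ -> n12 n23 n31]]]] := enum3 HT.
apply/eqP; rewrite -(eqn_pmul2l s0pos) (KE _ _ _ n12 n23 n31) KP.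
by case: (nzsq _); rewrite ?HN.
Qed.
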